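(* Let $(\mathcal{G},\mu)$ be an edge partition, $B\subseteq\mathcal{N}$, $\zeta\in\Theta_\mathcal{G}(B)$, $e\in\zeta\cap\mathcal{E}^-$ and $e'\in\mu(e)$. Then $(\zeta\setminus\{e\})\cup\{e'\}\in\Theta_\mathcal{G}(B)$.
   Context: $R$ is a partially ordered ring; $\mathcal{G}=(\mathcal{N},\mathcal{E})$ is a multidigraph with source/target maps $s,t\colon\mathcal{E}\to\mathcal{N}$, no self-loops, $\mathcal{N}=\{1,\dots,m+1\}$, labeling $\pi\colon\mathcal{E}\to R$. Trees/forests are subgraphs whose underlying undirected graph is acyclic (connected for trees); a tree is rooted at $N$ if $N$ is its only node without outgoing edges; spanning forests have node set $\mathcal{N}$ and are identified with their edge sets. $\Theta_\mathcal{G}(B)$ is the set of spanning forests with $|B|$ connected components, each a tree rooted at a node of $B$. A cycle is a closed directed path with no repeated nodes. $\mathcal{E}^-=\{e:\pi(e)\in R_{<0}\}$, $\mathcal{E}^+=\{e:\pi(e)\in R_{>0}\}$. A pair $(\mathcal{G},\mu)$ with $\mu\colon\mathcal{E}^-\to\mathcal{P}(\mathcal{E}^+)$ is an edge partition if (i) $\mathcal{E}=\mathcal{E}^+\sqcup\mathcal{E}^-$; (ii) every cycle contains at most one edge of $\mathcal{E}^-$; (iii) for each $e\in\mathcal{E}^-$: (a) $e'\in\mu(e)\Rightarrow s(e')=s(e)$; (b) $e'\in\mu(e)\Rightarrow$ every cycle containing $e'$ contains $t(e)$; (c) $\mu(e)\cap\mu(e')=\emptyset$ for $e\neq e'$.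 *)

(* Defs.v *)
From HB Require Import structures.
From mathcomp Require Import all_boot all_order all_algebra.
Set Implicit Arguments. Unset Strict Implicit. Unset Printing Implicit Defensive.
Import Order.TTheory GRing.Theory Num.Theory.
Local Open Scope ring_scope.

(* Multidigraph: nodes 'I_m.+1 (= {1,...,m+1}), edges a finType E,
   source/target maps s t : E -> 'I_m.+1.  Subgraphs spanning all nodes are
   identified with their edge sets F : {set E}. *)
Section Graph.
Variables (m : nat) (E : finType) (s t : E -> 'I_m.+1).

Definition uadj (F : {set E}) : rel 'I_m.+1 := fun x y =>
  [exists e in F, ((s e == x) && (t e == y)) || ((s e == y) && (t e == x))].

(* an undirected traversal of an edge: (e, true) goes s e -> t e,
   (e, false) goes t e -> s e *)
Definition uhead (p : E * bool) := if p.2 then s p.1 else t p.1.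
Definition utail (p : E * bool) := if p.2 then t p.1 else s p.1.

Definition ucycle_in (F : {set E}) (c : seq (E * bool)) : bool :=
  [&& (0 < size c)%N, all (fun p => p.1 \in F) c, uniq (map fst c),
      uniq (map uhead c) & map utail c == rot 1 (map uhead c)].

Definition acyclic (F : {set E}) : Prop := forall c, ~~ ucycle_in F c.

Definition sinkF (F : {set E}) (r : 'I_m.+1) : Prop := forall e, e \in F -> s e != r.

(* Theta_G(B): spanning forests with |B| connected components, each of them
   a tree rooted at a node of B (its unique node without outgoing edges). *)
Definition Theta (B : {set 'I_m.+1}) (F : {set E}) : Prop :=
  [/\ acyclic F,
      n_comp (uadj F) predT = #|B| &
      forall x : 'I_m.+1, exists r, [/\ r \in B, connect (uadj F) x r, sinkF F r &
         forall r', connect (uadj F) x r' -> sinkF F r' -> r' = r]].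

(* a (directed) cycle of G: closed directed path without repeated nodes,
   given by its list of edges e_0 ... e_{k-1} with t e_i = s e_{i+1 mod k} *)
Definition dcycle (c : seq E) : bool :=
  [&& (0 < size c)%N, uniq (map s c) & map t c == rot 1 (map s c)].

Definition cnodes (c : seq E) : seq 'I_m.+1 := map s c.

End Graph.

(* Edge partition (G, mu), with labeling pi : E -> R;
   E^- = {e | pi e < 0}, E^+ = {e | pi e > 0}.  mu is given as a total
   function E -> {set E}, only its values on E^- matter. *)
Definition edge_partition (R : porderZmodType) (m : nat) (E : finType)
  (s t : E -> 'I_m.+1) (pi : E -> R) (mu : E -> {set E}) : Prop :=
  [/\ forall e, (pi e < 0) || (0 < pi e),
      forall c, dcycle s t c -> (count (fun e => (pi e < 0)%R) c <= 1)%N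
      & forall e, pi e < 0 ->
        [/\ forall e', e' \in mu e -> 0 < pi e',
            forall e', e' \in mu e -> s e' = s e,
            forall e', e' \in mu e -> forall c, dcycle s t c ->
                        e' \in c -> t e \in cnodes s c &
            forall f, pi f < 0 -> f != e -> [disjoint mu e & mu f]]].

(* Main.v *)
Require Import Defs.
From HB Require Import structures.
From mathcomp Require Import all_boot all_order all_algebra.
Import Order.TTheory GRing.Theory Num.Theory.
Set Implicit Arguments. Unset Strict Implicit. Unset Printing Implicit Defensive.

Definition dadj m (E : finType) (s t : E -> 'I_m.+1) (F : {set E}) : rel 'I_m.+1 :=
  fun x y => [exists f in F, (s f == x) && (t f == y)].

Lemma uadj_sym m (E : finType) (s t : E -> 'I_m.+1) (F : {set E}) : symmetric (uadj s t F).
Proof.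
move=> x y; rewrite /uadj; apply/existsP/existsP => -[f /andP[fF H]]; exists f;
  by rewrite fF /= orbC.
Qed.

Lemma uadj_csym m (E : finType) (s t : E -> 'I_m.+1) (F : {set E}) : connect_sym (uadj s t F).
Proof. exact/sym_connect_sym/uadj_sym. Qed.

Lemma uadj_edge m (E : finType) (s t : E -> 'I_m.+1) (F : {set E}) f :
  f \in F -> uadj s t F (s f) (t f).
Proof. by move=> fF; apply/existsP; exists f; rewrite fF !eqxx. Qed.

Lemma dadj_uadj m (E : finType) (s t : E -> 'I_m.+1) (F : {set E}) x y :
  connect (dadj s t F) x y -> connect (uadj s t F) x y.
Proof.
apply: connect_sub => a b /existsP[f /andP[fF /andP[/eqP <- /eqP <-]]].
exact/connect1/uadj_edge.
Qed.

Lemma uadj_mono m (E : finType) (s t : E -> 'I_m.+1) (F G : {set E}) x y :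
  F \subset G -> connect (uadj s t F) x y -> connect (uadj s t G) x y.
Proof.
move=> FG; apply: connect_sub => a b /existsP[f /andP[fF H]].
by apply/connect1/existsP; exists f; rewrite (subsetP FG _ fF).
Qed.

Lemma dadj_mono m (E : finType) (s t : E -> 'I_m.+1) (F G : {set E}) x y :
  F \subset G -> connect (dadj s t F) x y -> connect (dadj s t G) x y.
Proof.
move=> FG; apply: connect_sub => a b /existsP[f /andP[fF H]].
by apply/connect1/existsP; exists f; rewrite (subsetP FG _ fF).
Qed.

Lemma walk_connect m (E : finType) (s t : E -> 'I_m.+1) (F : {set E}) (w : seq (E * bool)) a :
  all (fun q => q.1 \in F) w ->
  map (uhead s t) w = belast a (map (utail s t) w) ->
  connect (uadj s t F) a (last a (map (utail s t) w)).
Proof.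
elim: w a => [|q w IH] a //= /andP[qF wF] [ha hw].
apply: connect_trans (IH _ wF hw).
apply/connect1/existsP; exists q.1; rewrite qF /= -ha /uhead /utail.
by case: q.2; rewrite !eqxx ?orbT.
Qed.

Lemma cycle_connect m (E : finType) (s t : E -> 'I_m.+1) (F : {set E}) c q :
  ucycle_in s t F c -> q \in c ->
  connect (uadj s t (F :\ q.1)) (utail s t q) (uhead s t q).
Proof.
case/and5P => _ cF uc _ /eqP ht qc.
pose c' := rot (index q c) c.
have c'E : c' = q :: (drop (index q c).+1 c ++ take (index q c) c) by rewrite /c' rot_index.
set w := drop _ _ ++ _ in c'E.
have ht' : map (utail s t) c' = rot 1 (map (uhead s t) c').
  by rewrite /c' !map_rot ht rot_rot.
have uc' : uniq (map fst c') by rewrite /c' map_rot rot_uniq.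
have cF' : all (fun q => q.1 \in F) c' by apply/allP => p; rewrite /c' mem_rot; apply: (allP cF).
rewrite c'E /= rot1_cons in ht'.
rewrite c'E /= in uc' cF'; case/andP: uc' => qw _; case/andP: cF' => _ wF.
have := lastI (utail s t q) (map (utail s t) w); rewrite ht' => /rcons_inj [h1 h2].
rewrite h2; apply: walk_connect; last by rewrite h1.
apply/allP => p pw; rewrite !inE (allP wF _ pw) andbT.
by apply: contraNneq qw => <-; apply: map_f.
Qed.

Lemma build_u m (E : finType) (s t : E -> 'I_m.+1) (G : {set E}) p x :
  uniq (x :: p) -> path (uadj s t G) x p ->
  exists c : seq (E * bool), [/\ all (fun q => q.1 \in G) c, uniq (map fst c),
    map (uhead s t) c = belast x p, map (utail s t) c = p &
    forall q, q \in c -> (s q.1 \in x :: p) && (t q.1 \in x :: p)].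
Proof.
elim: p x => [|y p IH] x.
  by move=> _ _; exists [::]; split.
rewrite /= => /andP[xyp uyp] /andP[/existsP[g /andP[gG hg]] pp].
have [c [cG uc hc tc ec]] := IH y uyp pp.
have [q0 [q0E hq0 tq0]] : exists q0 : E * bool, [/\ q0.1 = g, uhead s t q0 = x & utail s t q0 = y].
  case/orP: hg => /andP[/eqP h1 /eqP h2]; [exists (g, true) | exists (g, false)]; by [].
exists (q0 :: c); split => //=.
- by rewrite q0E gG.
- rewrite uc andbT q0E; apply/negP => /mapP[q qc gq].
  have /andP[sq tq] := ec q qc.
  case/orP: hg => /andP[/eqP h1 /eqP h2].
    by move: sq; rewrite -gq h1 => sq; rewrite sq in xyp.
  by move: tq; rewrite -gq h2 => tq; rewrite tq in xyp.
- by rewrite hq0 hc.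
- by rewrite tq0 tc.
move=> q /orP[/eqP -> | qc].
  rewrite q0E.
  by case/orP: hg => /andP[/eqP h1 /eqP h2]; rewrite h1 h2 !inE !eqxx ?orbT.
by have /andP[h1 h2] := ec q qc; rewrite inE h1 orbT inE h2 orbT.
Qed.

Lemma build_d m (E : finType) (s t : E -> 'I_m.+1) (G : {set E}) p x :
  path (dadj s t G) x p ->
  exists c : seq E, [/\ all (fun g => g \in G) c, map s c = belast x p & map t c = p].
Proof.
elim: p x => [|y p IH] x; first by exists [::].
rewrite /= => /andP[/existsP[g /andP[gG /andP[/eqP h1 /eqP h2]]] pp].
have [c [cG hc tc]] := IH y pp.
by exists (g :: c); rewrite /= gG cG hc tc h1 h2.
Qed.

Lemma acyc_disc m (E : finType) (s t : E -> 'I_m.+1) (F : {set E}) f :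
  acyclic s t F -> f \in F ->
  ~~ connect (uadj s t (F :\ f)) (s f) (t f).
Proof.
move=> acF fF; apply/negP; rewrite uadj_csym => /connectP[p pp lp].
move: lp; case: (shortenP pp) => p' pp' up' _ lp'.
have [c [cG uc hc tc _]] := build_u up' pp'.
apply: (negP (acF (rcons c (f, true)))).
rewrite /ucycle_in size_rcons /= all_rcons /= fF /=.
apply/and4P; split.
- by apply/allP => q qc; have := allP cG q qc; rewrite inE => /andP[].
- rewrite map_rcons rcons_uniq uc andbT; apply/mapP => -[q qc /= fq].
  by have := allP cG q qc; rewrite -fq !inE eqxx.
- by rewrite map_rcons hc /uhead /= lp' -lastI.
- by rewrite !map_rcons hc tc /uhead /utail /= lp' -lastI rot1_cons.
Qed.

Lemma dcycle_acyc m (E : finType) (s t : E -> 'I_m.+1) (F : {set E}) c :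
  acyclic s t F -> dcycle s t c -> all (fun g => g \in F) c -> False.
Proof.
move=> acF /and3P[c0 us /eqP ht] cF.
apply: (negP (acF (map (fun g => (g, true)) c))).
have mf : map fst (map (fun g => (g, true)) c) = c by rewrite -map_comp map_id.
have mh : map (uhead s t) (map (fun g => (g, true)) c) = map s c by rewrite -map_comp.
have mt : map (utail s t) (map (fun g => (g, true)) c) = map t c by rewrite -map_comp.
rewrite /ucycle_in size_map c0 mf mh mt us ht eqxx (map_uniq us) !andbT /=.
by rewrite all_map.
Qed.

Lemma no_dloop m (E : finType) (s t : E -> 'I_m.+1) (F : {set E}) f :
  acyclic s t F -> f \in F -> ~~ connect (dadj s t F) (t f) (s f).
Proof.
move=> acF fF; apply/negP => /connectP[p pp lp].
move: lp; case: (shortenP pp) => p' pp' up' _ lp'.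
have [c [cG hc tc]] := build_d pp'.
apply: (dcycle_acyc (c := rcons c f) acF); last by rewrite all_rcons fF.
rewrite /dcycle size_rcons /= !map_rcons hc tc lp' -lastI up' rot1_cons eqxx.
by [].
Qed.

Lemma connect_add m (E : finType) (s t : E -> 'I_m.+1) (G : {set E}) f a b :
  connect (uadj s t (f |: G)) a b ->
  connect (uadj s t G) a b \/
  ((connect (uadj s t G) a (s f) || connect (uadj s t G) a (t f)) &&
   (connect (uadj s t G) b (s f) || connect (uadj s t G) b (t f))).
Proof.
move/connectP => [p pp ->] {b}; elim: p a pp => [|y p IH] a /=; first by left.
case/andP => /existsP[g /andP[gG hg]] /IH {IH}.
set b := last y p; set C := connect (uadj s t G).
have Csym := uadj_csym s t G.
case/setU1P: gG => [gf | gG].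
  have ends : forall z, (s g == z) || (t g == z) -> C z (s f) || C z (t f).
    by move=> z /orP[] /eqP <-; rewrite gf /C connect0 ?orbT.
  have ha : C a (s f) || C a (t f).
    by apply: ends; case/orP: hg => /andP[/eqP h1 /eqP h2]; rewrite h1 h2 eqxx ?orbT.
  have hy : C y (s f) || C y (t f).
    by apply: ends; case/orP: hg => /andP[/eqP h1 /eqP h2]; rewrite h1 h2 eqxx ?orbT.
  case => [Cyb | /andP[_ hb]]; right; rewrite ha //=.
  by case/orP: hy => h; apply/orP; [left|right]; apply: connect_trans h; rewrite /C Csym.
have Cay : C a y.
  apply/connect1/existsP; exists g; rewrite gG /=.
  by [].
case => [Cyb | /andP[hy hb]]; [left | right].
  exact: connect_trans Cay Cyb.
rewrite hb andbT.
by case/orP: hy => h; apply/orP; [left|right]; apply: connect_trans Cay h.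
Qed.

Definition sinkb m (E : finType) (s : E -> 'I_m.+1) (F : {set E}) r :=
  [forall f in F, s f != r].

Lemma sinkP m (E : finType) (s : E -> 'I_m.+1) (F : {set E}) r :
  reflect (sinkF s F r) (sinkb s F r).
Proof.
apply: (iffP forall_inP) => H f fF; exact: H.
Qed.

Lemma ncomp_sinks m (E : finType) (s t : E -> 'I_m.+1) (F : {set E}) :
  (forall x, exists r, [/\ connect (uadj s t F) x r, sinkF s F r &
     forall r', connect (uadj s t F) x r' -> sinkF s F r' -> r' = r]) ->
  n_comp (uadj s t F) predT = #|[set r | sinkb s F r]|.
Proof.
move=> H; have Csym := uadj_csym s t F.
rewrite -(@card_in_imset _ _ (fingraph.root (uadj s t F))); last first.
  move=> r1 r2; rewrite !inE => /sinkP s1 /sinkP s2 /(fingraph.rootP Csym) c12.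
  have [r [_ _ u]] := H r1.
  by rewrite (u r1 (connect0 _ _) s1) (u r2 c12 s2).
apply: eq_card => x; rewrite !inE andbT; apply/idP/imsetP.
  move=> rx; have [r [cxr sr _]] := H x; exists r; first by rewrite inE; apply/sinkP.
  by apply: (etrans (esym (eqP rx))); apply/(fingraph.rootP Csym).
by case=> r _ ->; apply: roots_root.
Qed.

Local Open Scope ring_scope.

Theorem lemma3p4 (R : porderZmodType) (m : nat) (E : finType)
  (s t : E -> 'I_m.+1) (pi : E -> R) (mu : E -> {set E})
  (no_loops : forall e, s e != t e)
  (Hpart : edge_partition s t pi mu)
  (B : {set 'I_m.+1}) (zeta : {set E})
  (Hzeta : Theta s t B zeta)
  (e : E) (he : e \in zeta) (he_neg : pi e < 0)
  (e' : E) (he' : e' \in mu e) :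
  Theta s t B (e' |: (zeta :\ e)).
Proof.
case: Hpart => _ _ Hiii; have [_ Ha Hb _] := Hiii e he_neg.
have se' : s e' = s e := Ha e' he'.
case: Hzeta => acZ ncZ HZ.
set D := zeta :\ e.
have DZ : D \subset zeta := subD1set zeta e.
have DF : D \subset e' |: D := subsetUr _ _.
have symD := uadj_csym s t D.
have symZ := uadj_csym s t zeta.
have F1 : ~~ connect (uadj s t D) (s e) (t e) := acyc_disc acZ he.
have uZ : forall a b, sinkF s zeta a -> sinkF s zeta b ->
    connect (uadj s t zeta) a b -> a = b.
  move=> a b sa sb cab; have [r [_ _ _ u]] := HZ a.
  by rewrite (u a (connect0 _ _) sa) (u b cab sb).
have inB : forall z, sinkF s zeta z -> z \in B.
  move=> z sz; have [r [rB _ _ u]] := HZ z.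
  by rewrite (u z (connect0 _ _) sz).
have W : forall y, exists z, connect (dadj s t D) y z /\ (z = s e \/ sinkF s zeta z).
  move=> y.
  have [n Hn] : exists n, (#|[set z | connect (dadj s t zeta) y z]| < n)%N.
    by exists #|[set z | connect (dadj s t zeta) y z]|.+1.
  elim: n y Hn => [|n IH] y //= Hn.
  case: (eqVneq y (s e)) => [->|ye].
    by exists (s e); split; [apply: connect0 | left].
  case: (boolP (sinkb s zeta y)) => [/sinkP sy|].
    by exists y; split; [apply: connect0 | right].
  rewrite negb_forall_in => /exists_inP [f fZ /negPn /eqP sfy].
  have fD : f \in D by rewrite !inE fZ andbT; apply: contra_neq ye => <-; rewrite sfy.
  have lt : (#|[set z | connect (dadj s t zeta) (t f) z]| <
             #|[set z | connect (dadj s t zeta) y z]|)%N.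
    apply: proper_card; apply/properP; split.
      apply/subsetP => z; rewrite !inE; apply: connect_trans.
      by apply/connect1/existsP; exists f; rewrite fZ sfy !eqxx.
    exists y; first by rewrite inE connect0.
    by rewrite inE -sfy (no_dloop acZ fZ).
  have [z [hz pz]] := IH (t f) (leq_trans lt Hn).
  exists z; split => //; apply: connect_trans hz.
  by apply/connect1/existsP; exists f; rewrite fD sfy !eqxx.
have [r0 [hr0 sr0]] : exists r0, connect (dadj s t D) (t e) r0 /\ sinkF s zeta r0.
  have [z [hz [ze|sz]]] := W (t e); last by exists z.
  by move: (no_dloop acZ he); rewrite -ze (dadj_mono DZ hz).
have F5 : forall y, connect (uadj s t D) (s e) y -> connect (dadj s t D) y (s e).
  move=> y hy; have [z [hz [<-|sz]]] := W y => //.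
  have zr0 : z = r0.
    apply: uZ => //.
    apply: (connect_trans (y := y)); first by rewrite symZ; apply: (uadj_mono DZ); exact: dadj_uadj.
    apply: (connect_trans (y := s e)); first by rewrite symZ; exact: (uadj_mono DZ).
    apply: (connect_trans (y := t e)); first exact/connect1/uadj_edge.
    exact/(uadj_mono DZ)/dadj_uadj.
  case/negP: F1; apply: (connect_trans hy); apply: (connect_trans (dadj_uadj hz)).
  by rewrite zr0 symD; apply: dadj_uadj.
have F6 : ~~ connect (uadj s t D) (s e) (t e').
  apply/negP => H; have /connectP[p pp] := F5 _ H.
  case: (shortenP pp) => p' pp' up' _ lp.
  have [c [cG hc tc]] := build_d pp'.
  have dc : dcycle s t (e' :: c).
    rewrite /dcycle /= hc tc se' lp rot1_cons -lastI eqxx andbT /=.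
    by move: up'; rewrite lastI rcons_uniq.
  have := Hb e' he' _ dc (mem_head _ _); rewrite /cnodes /= inE se' hc.
  case/orP => [/eqP h | /mem_belast h]; first by move: (no_loops e); rewrite h eqxx.
  case/negP: F1; apply: (connect_trans H); apply: dadj_uadj.
  exact: (path_connect pp').
have NS : forall a, connect (uadj s t D) (s e) a -> sinkF s zeta a -> False.
  move=> a ha sa; have /connectP[[|y p] pp lp] := F5 _ ha.
    by move: (sa e he); rewrite /= in lp; rewrite lp eqxx.
  case/andP: pp => /existsP[f /andP[fD /andP[/eqP sf _]]] _.
  by move: (sa f (subsetP DZ _ fD)); rewrite sf eqxx.
have sinkE : forall r, sinkF s (e' |: D) r <-> sinkF s zeta r.
  move=> r; split => sr f.
    move=> fZ; case: (eqVneq f e) => [->|fe].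
      by rewrite -se'; apply: sr; rewrite setU11.
    by apply: sr; rewrite !inE fe fZ orbT.
  case/setU1P => [->|fD]; first by rewrite se'; apply: sr.
  exact/sr/(subsetP DZ).
have UF : forall a b, sinkF s zeta a -> sinkF s zeta b ->
    connect (uadj s t (e' |: D)) a b -> a = b.
  move=> a b sa sb /connect_add [cab|/andP[ha hb]].
    by apply: uZ => //; apply: (uadj_mono DZ).
  rewrite se' in ha hb.
  case/orP: ha => [ha|ha]; first by case: (NS a) => //; rewrite symD.
  case/orP: hb => [hb|hb]; first by case: (NS b) => //; rewrite symD.
  apply: uZ => //; apply: (uadj_mono DZ); apply: connect_trans ha _.
  by rewrite symD.
have H3 : forall x, exists r, [/\ r \in B, connect (uadj s t (e' |: D)) x r,
    sinkF s (e' |: D) r & forall r', connect (uadj s t (e' |: D)) x r' ->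
      sinkF s (e' |: D) r' -> r' = r].
  have symF := uadj_csym s t (e' |: D).
  move=> x.
  have [r [cxr sr]] : exists r, connect (uadj s t (e' |: D)) x r /\ sinkF s zeta r.
    have [z [hz [ze|sz]]] := W x; last first.
      by exists z; split => //; apply: (uadj_mono DF); apply: dadj_uadj.
    have [z' [hz' [ze'|sz']]] := W (t e').
      by case/negP: F6; rewrite symD -{1}ze'; apply: dadj_uadj.
    exists z'; split => //.
    apply: (connect_trans (y := s e)); first by rewrite -ze; apply: (uadj_mono DF); apply: dadj_uadj.
    apply: (connect_trans (y := t e')).
      by rewrite -se'; apply/connect1/uadj_edge; rewrite setU11.
    by apply: (uadj_mono DF); apply: dadj_uadj.
  exists r; split => //; first exact: inB; first by apply/sinkE.
  move=> r' cxr' /sinkE sr'; apply: UF => //.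
  by apply: connect_trans cxr; rewrite symF.
split => //.
- move=> c; apply/negP => cc; case: (boolP (e' \in map fst c)).
    case/mapP => q qc qe.
    have := cycle_connect cc qc; rewrite -qe => h.
    have h' : connect (uadj s t D) (utail s t q) (uhead s t q).
      apply: (uadj_mono _ h); apply/subsetP => f; rewrite !inE.
      by case/andP => /negPf ->.
    case/negP: F6; rewrite -se'.
    move: h'; rewrite /utail /uhead -qe; case: q.2 => //.
    by rewrite symD.
  move=> ne; move/negP: (acZ c); apply.
  case/and5P: cc => c0 cF uc uh ht; rewrite /ucycle_in c0 uc uh ht /= andbT.
  apply/allP => q qc; have := allP cF q qc; case/setU1P.
    by move=> h; case/negP: ne; rewrite -h; apply: map_f.
  by move/(subsetP DZ).
- rewrite -ncZ (ncomp_sinks (F := e' |: D)) ?(ncomp_sinks (F := zeta)).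
  + by apply: eq_card => r; rewrite !inE; apply/sinkP/sinkP => /sinkE.
  + by move=> x; have [r [_ ? ? ?]] := HZ x; exists r.
  + by move=> x; have [r [_ ? ? ?]] := H3 x; exists r.
Qed.
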